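(* Let $n\ge2$ and $\sigma,\delta,\tau\in\mathbb{C}$ with $\sigma\tau\ne0$, and let $\lambda_h=\delta+2\sqrt{\sigma\tau}\cos\frac{h\pi}{n+1}$ ($1\le h\le n$) be an eigenvalue of $T=(n;\sigma,\delta,\tau)$. Then its $\mathcal{T}$-structured condition number is \[ \kappa_{\mathcal T}(\lambda_h)=\sqrt{\frac1n+\frac1{n-1}\left(\left|\frac{\sigma}{\tau}\right|+\left|\frac{\tau}{\sigma}\right|\right)\cos^2\frac{h\pi}{n+1}}. \] In particular $\kappa_{\mathcal T}(\lambda_h)$ depends only on $h$, $n$ and $|\sigma/\tau|$.
   Context: $T=(n;\sigma,\delta,\tau)$ is the $n\times n$ tridiagonal Toeplitz matrix with diagonal $\delta$, superdiagonal $\tau$, subdiagonal $\sigma$. Its eigenvalue $\lambda_h$ has right eigenvector $x_h$ with components $x_{h,k}=(\sqrt{\sigma/\tau})^k\sin\frac{hk\pi}{n+1}$ and left eigenvector $y_h$ ($y_h^HT=\lambda_hy_h^H$) with $y_{h,k}=(\sqrt{\bar\tau/\bar\sigma})^k\sin\frac{hk\pi}{n+1}$, $k=1,\dots,n$. Let $\widetilde x_h=x_h/\|x_h\|_2$, $\widetilde y_h=y_h/\|y_h\|_2$, $\kappa(\lambda_h)=\|x_h\|_2\|y_h\|_2/|y_h^Hx_h|$, and $W_h=\widetilde y_h\widetilde x_h^H$ (the Wilkinson perturbation). Let $\mathcal T\subset\mathbb{C}^{n\times n}$ be the subspace of $n\times n$ tridiagonal Toeplitz matrices and $W_h|_{\mathcal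 T}$ the orthogonal projection of $W_h$ onto $\mathcal T$ with respect to the Frobenius inner product. The $\mathcal T$-structured condition number is $\kappa_{\mathcal T}(\lambda_h)=\kappa(\lambda_h)\,\|W_h|_{\mathcal T}\|_F$. *)

(* Defs.v *)
From mathcomp Require Import all_boot all_order all_algebra.
From mathcomp Require Import complex.
From mathcomp Require Import reals trigo.

Set Implicit Arguments.
Unset Strict Implicit.
Unset Printing Implicit Defensive.

Import Order.TTheory GRing.Theory Num.Theory.
Local Open Scope ring_scope.
Local Open Scope complex_scope.

Section TT.
Variable R : realType.
Local Notation C := R[i].

Definition tridiag_toeplitz (n : nat) (sigma delta tau : C) : 'M[C]_n :=
  \matrix_(i < n, j < n)
    if i == j :> nat then delta
    else if j == i.+1 :> nat then tau
    else if i == j.+1 :> nat then sigma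
    else 0.

Definition is_tridiag_toeplitz (n : nat) (A : 'M[C]_n) : Prop :=
  exists sigma delta tau : C, A = tridiag_toeplitz n sigma delta tau.

Definition frob_inner (n : nat) (A B : 'M[C]_n) : C :=
  \sum_(i < n) \sum_(j < n) (A i j)^* * B i j.

Definition frob_norm (n : nat) (A : 'M[C]_n) : R :=
  Num.sqrt (\sum_(i < n) \sum_(j < n) (Normc.normc (A i j)) ^+ 2).

Definition vnorm2 (n : nat) (v : 'cV[C]_n) : R :=
  Num.sqrt (\sum_(k < n) (Normc.normc (v k 0)) ^+ 2).

Definition ctrmx (m n : nat) (A : 'M[C]_(m, n)) : 'M[C]_(n, m) :=
  map_mx (@conjc R) A^T.

Definition cdot (n : nat) (y x : 'cV[C]_n) : C :=
  \sum_(k < n) (y k 0)^* * x k 0.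

(* Right eigenvector x_h: x_{h,k} = (sqrt(sigma/tau))^k sin(h k pi/(n+1)),
   k = 1..n (row index i : 'I_n corresponds to k = i+1).
   sqrtc is the principal complex square root. *)
Definition right_evec (n h : nat) (sigma tau : C) : 'cV[C]_n :=
  \col_(i < n) (sqrtc (sigma / tau) ^+ i.+1 *
                (sin ((h * i.+1)%:R * pi / (n.+1)%:R))%:C).

Definition left_evec (n h : nat) (sigma tau : C) : 'cV[C]_n :=
  \col_(i < n) (sqrtc (tau^* / sigma^*) ^+ i.+1 *
                (sin ((h * i.+1)%:R * pi / (n.+1)%:R))%:C).

Definition kappa (n h : nat) (sigma tau : C) : R :=
  let x := right_evec n h sigma tau in
  let y := left_evec n h sigma tau in
  vnorm2 x * vnorm2 y / Normc.normc (cdot y x).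

Definition wilkinson (n h : nat) (sigma tau : C) : 'M[C]_n :=
  let x := right_evec n h sigma tau in
  let y := left_evec n h sigma tau in
  ((vnorm2 y)^-1)%:C *: y *m ctrmx (((vnorm2 x)^-1)%:C *: x).

Definition is_orth_proj_T (n : nat) (W P : 'M[C]_n) : Prop :=
  is_tridiag_toeplitz P /\
  forall Q : 'M[C]_n, is_tridiag_toeplitz Q -> frob_inner Q (W - P) = 0.

End TT.

(* Main.v *)
Require Import Defs.
From mathcomp Require Import all_boot all_order all_algebra.
From mathcomp Require Import complex.
From mathcomp Require Import reals trigo.
From mathcomp Require Import ring lra zify.
Import Order.TTheory GRing.Theory Num.Theory.
Local Open Scope ring_scope.
Local Open Scope complex_scope.

Section H.
Variable R : realType.
Local Notation C := R[i].

Lemma sqrtcZ (k : R) (z : C) : 0 < k -> sqrtc (k%:C * z) = (Num.sqrt k)%:C * sqrtc z.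
Proof.
move=> k0; case: z => a b.
have -> : k%:C * (a +i* b) = (k * a) +i* (k * b) by simpc.
rewrite /sqrtc.
have -> : (k * a) ^+ 2 + (k * b) ^+ 2 = k ^+ 2 * (a ^+ 2 + b ^+ 2) by ring.
have -> : Num.sqrt (k ^+ 2 * (a ^+ 2 + b ^+ 2)) = k * Num.sqrt (a ^+ 2 + b ^+ 2).
  by rewrite sqrtrM ?sqr_ge0 // sqrtr_sqr (gtr0_norm k0).
rewrite mulf_eq0 (gt_eqF k0) /= sgrM (gtr0_sg k0) mul1r.
set r := Num.sqrt (a ^+ 2 + b ^+ 2).
have -> : (k * r + k * a) / 2%:R = k * ((r + a) / 2%:R) by ring.
have -> : (k * r - k * a) / 2%:R = k * ((r - a) / 2%:R) by ring.
rewrite !(sqrtrM _ (ltW k0)).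
by simpc; rewrite mulrCA.
Qed.

Lemma sum_if_eq (V : nmodType) n k (g : nat -> V) :
  \sum_(j < n) (if (j : nat) == k then g j else 0) = if (k < n)%N then g k else 0.
Proof.
elim: n => [|n IH]; first by rewrite big_ord0.
rewrite big_ord_recr /= IH.
case: (ltngtP k n) => H.
- by rewrite ltnS (ltnW H) addr0.
- by rewrite ltnS leqNgt H /= addr0.
- by rewrite H ltnSn add0r.
Qed.
Arguments sum_if_eq {V}.

Lemma cnt_diag (V : nmodType) n (v : V) :
  \sum_(i < n) \sum_(j < n) (if (i : nat) == j then v else 0) = v *+ n.
Proof.
rewrite (eq_bigr (fun _ => v)); first by rewrite sumr_const card_ord.
move=> i _; rewrite (eq_bigr (fun j : 'I_n => if (j : nat) == i then (fun _ => v) (j : nat) else 0)).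
  by rewrite sum_if_eq ltn_ord.
by move=> j _; rewrite eq_sym.
Qed.

Lemma cnt_super (V : nmodType) n (v : V) :
  \sum_(i < n) \sum_(j < n) (if (j : nat) == i.+1 then v else 0) = v *+ n.-1.
Proof.
rewrite (eq_bigr (fun i : 'I_n => if (i.+1 < n)%N then v else 0)); last first.
  by move=> i _; rewrite (sum_if_eq n i.+1 (fun _ => v)).
case: n => [|m]; first by rewrite big_ord0.
rewrite big_ord_recr /= ltnn addr0 (eq_bigr (fun _ => v)).
  by rewrite sumr_const card_ord.
by move=> i _; rewrite ltnS ltn_ord.
Qed.

Lemma cnt_sub (V : nmodType) n (v : V) :
  \sum_(i < n) \sum_(j < n) (if (i : nat) == j.+1 then v else 0) = v *+ n.-1.
Proof.
rewrite exchange_big /=.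
rewrite (eq_bigr (fun i : 'I_n => if (i.+1 < n)%N then v else 0)); last first.
  by move=> i _; rewrite (sum_if_eq n i.+1 (fun _ => v)).
case: n => [|m]; first by rewrite big_ord0.
rewrite big_ord_recr /= ltnn addr0 (eq_bigr (fun _ => v)).
  by rewrite sumr_const card_ord.
by move=> i _; rewrite ltnS ltn_ord.
Qed.

Lemma if3 (T : Type) (V : zmodType) (phi : T -> V) (x0 d b a : T) (i j : nat) :
  phi x0 = 0 ->
  phi (if i == j then d else if j == i.+1 then b else if i == j.+1 then a else x0) =
  (if i == j then phi d else 0) + (if j == i.+1 then phi b else 0) + (if i == j.+1 then phi a else 0).
Proof.
move=> p0.
case: eqP => H1; case: eqP => H2; case: eqP => H3; try lia;
  by rewrite ?addr0 ?add0r.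
Qed.
Arguments if3 {T V}.
Lemma sel_super (V : zmodType) (a d b : V) (i j : nat) :
  (if j == i.+1 then (if i == j then d else if j == i.+1 then b else if i == j.+1 then a else 0) else 0)
  = if j == i.+1 then b else 0.
Proof. by case: (@eqP _ i j) => H1; case: (@eqP _ j i.+1) => H2; case: (@eqP _ i j.+1) => H3; try lia. Qed.
Lemma sel_sub (V : zmodType) (a d b : V) (i j : nat) :
  (if i == j.+1 then (if i == j then d else if j == i.+1 then b else if i == j.+1 then a else 0) else 0)
  = if i == j.+1 then a else 0.
Proof. by case: (@eqP _ i j) => H1; case: (@eqP _ j i.+1) => H2; case: (@eqP _ i j.+1) => H3; try lia. Qed.

Arguments cnt_diag {V}.
Arguments cnt_super {V}.
Arguments cnt_sub {V}.
Definition diagS n (M : 'M[C]_n) := \sum_(i < n) \sum_(j < n) (if (i : nat) == j then M i j else 0).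
Definition superS n (M : 'M[C]_n) := \sum_(i < n) \sum_(j < n) (if (j : nat) == i.+1 then M i j else 0).
Definition subS n (M : 'M[C]_n) := \sum_(i < n) \sum_(j < n) (if (i : nat) == j.+1 then M i j else 0).

Arguments diagS {n}.
Arguments superS {n}.
Arguments subS {n}.

Lemma frob_inner_tt n (a d b : C) (M : 'M[C]_n) :
  frob_inner (tridiag_toeplitz n a d b) M = d^* * diagS M + b^* * superS M + a^* * subS M.
Proof.
rewrite /frob_inner /diagS /superS /subS !mulr_sumr -!big_split /=.
apply: eq_bigr => i _; rewrite !mulr_sumr -!big_split /=.
apply: eq_bigr => j _; rewrite mxE (if3 (fun x : C => x^* * M i j)); last by rewrite conjC0 mul0r.
by rewrite !(fun_if (fun x => _ * x)) !mulr0.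
Qed.

Lemma diagS_tt n (a d b : C) : diagS (tridiag_toeplitz n a d b) = d *+ n.
Proof.
rewrite /diagS -(cnt_diag n d); apply: eq_bigr => i _; apply: eq_bigr => j _.
by rewrite mxE; case: eqP.
Qed.

Lemma superS_tt n (a d b : C) : superS (tridiag_toeplitz n a d b) = b *+ n.-1.
Proof.
rewrite /superS -(cnt_super n b); apply: eq_bigr => i _; apply: eq_bigr => j _.
by rewrite mxE sel_super.
Qed.

Lemma subS_tt n (a d b : C) : subS (tridiag_toeplitz n a d b) = a *+ n.-1.
Proof.
rewrite /subS -(cnt_sub n a); apply: eq_bigr => i _; apply: eq_bigr => j _.
by rewrite mxE sel_sub.
Qed.

Lemma diagSB n (A B : 'M[C]_n) : diagS (A - B) = diagS A - diagS B.
Proof.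
rewrite /diagS -sumrB; apply: eq_bigr => i _; rewrite -sumrB; apply: eq_bigr => j _.
by rewrite !mxE; case: ifP; rewrite ?subr0.
Qed.
Lemma superSB n (A B : 'M[C]_n) : superS (A - B) = superS A - superS B.
Proof.
rewrite /superS -sumrB; apply: eq_bigr => i _; rewrite -sumrB; apply: eq_bigr => j _.
by rewrite !mxE; case: ifP; rewrite ?subr0.
Qed.
Lemma subSB n (A B : 'M[C]_n) : subS (A - B) = subS A - subS B.
Proof.
rewrite /subS -sumrB; apply: eq_bigr => i _; rewrite -sumrB; apply: eq_bigr => j _.
by rewrite !mxE; case: ifP; rewrite ?subr0.
Qed.

Lemma frob_norm_tt n (a d b : C) :
  frob_norm (tridiag_toeplitz n a d b) =
  Num.sqrt (Normc.normc d ^+ 2 *+ n + Normc.normc b ^+ 2 *+ n.-1 + Normc.normc a ^+ 2 *+ n.-1).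
Proof.
rewrite /frob_norm; congr Num.sqrt.
rewrite -cnt_diag -cnt_super -cnt_sub -!big_split /=; apply: eq_bigr => i _.
rewrite -!big_split /=; apply: eq_bigr => j _.
by rewrite mxE (if3 (fun x : C => Normc.normc x ^+ 2)) // Normc.normc0 expr0n.
Qed.

Lemma proj_char n (W P : 'M[C]_n) : is_orth_proj_T W P ->
  exists a d b, P = tridiag_toeplitz n a d b /\ diagS W = d *+ n /\
     superS W = b *+ n.-1 /\ subS W = a *+ n.-1.
Proof.
move=> [[a [d [b ->]]] H]; exists a, d, b; split => //.
have H1 := H (tridiag_toeplitz n 0 1 0) (ex_intro _ 0 (ex_intro _ 1 (ex_intro _ 0 erefl))).
have H2 := H (tridiag_toeplitz n 0 0 1) (ex_intro _ 0 (ex_intro _ 0 (ex_intro _ 1 erefl))).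
have H3 := H (tridiag_toeplitz n 1 0 0) (ex_intro _ 1 (ex_intro _ 0 (ex_intro _ 0 erefl))).
rewrite frob_inner_tt conjC0 conjC1 !mul0r !mul1r !addr0 diagSB diagS_tt in H1.
rewrite frob_inner_tt conjC0 conjC1 !mul0r !mul1r add0r addr0 superSB superS_tt in H2.
rewrite frob_inner_tt conjC0 conjC1 !mul0r !mul1r !add0r subSB subS_tt in H3.
by split; [|split]; apply/eqP; rewrite -subr_eq0; apply/eqP.
Qed.

Lemma divMn (x : C) k : (k%:R : C) != 0 -> (x / k%:R) *+ k = x.
Proof. by move=> k0; rewrite -mulr_natr divfK. Qed.

Lemma proj_exists n (W : 'M[C]_n) : (1 < n)%N -> exists P, is_orth_proj_T W P.
Proof.
move=> n1.
have nz : (n%:R : C) != 0 by rewrite pnatr_eq0 -lt0n ltnW.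
have nz1 : (n.-1%:R : C) != 0 by rewrite pnatr_eq0 -subn1 subn_eq0 -ltnNge.
exists (tridiag_toeplitz n (subS W / n.-1%:R) (diagS W / n%:R) (superS W / n.-1%:R)).
split; first by exists (subS W / n.-1%:R), (diagS W / n%:R), (superS W / n.-1%:R).
move=> Q [a [d [b ->]]].
rewrite frob_inner_tt diagSB superSB subSB diagS_tt superS_tt subS_tt.
by rewrite !divMn // !subrr !mulr0 !addr0.
Qed.
Definition ff (n h k : nat) : R := sin ((h * k)%:R * pi / (n.+1)%:R).

Lemma ffE n h k : ff n h k = sin (((h * k)%N)%:R * pi / (n.+1)%:R).
Proof. by []. Qed.

Lemma sin_natpi (h : nat) : sin (h%:R * pi) = 0 :> R.
Proof.
elim: h => [|h IH]; first by rewrite mul0r sin0.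
by rewrite -addn1 natrD mulrDl mul1r sinDpi IH oppr0.
Qed.

Lemma ff_last n h : ff n h n.+1 = 0.
Proof.
rewrite ffE natrM.
have n0 : (n.+1%:R : R) != 0 by rewrite pnatr_eq0.
have -> : h%:R * n.+1%:R * pi / n.+1%:R = h%:R * pi :> R by field; rewrite paddr_eq0 ?ler0n // oner_eq0.
exact: sin_natpi.
Qed.

Lemma ff0 n h : ff n h 0 = 0.
Proof. by rewrite ffE muln0 mul0r mul0r sin0. Qed.

Lemma ff_1_gt0 n h : (1 <= h <= n)%N -> 0 < ff n h 1.
Proof.
move=> /andP[h1 hn]; rewrite ffE muln1; apply: sin_gt0_pi.
have n0 : (0 : R) < (n.+1)%:R by rewrite ltr0n.
apply/andP; split.
  by rewrite divr_gt0 // mulr_gt0 ?pi_gt0 // ltr0n.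
rewrite ltr_pdivrMr // mulrC ltr_pM2l ?pi_gt0 // ltr_nat ltnS //.
Qed.

Lemma ff_rec n h k : ff n h k.+2 + ff n h k = 2 * ff n h k.+1 * cos (h%:R * pi / (n.+1)%:R).
Proof.
rewrite !ffE.
set al := h%:R * pi / (n.+1)%:R.
have -> : (h * k.+2)%:R * pi / (n.+1)%:R = (h * k.+1)%:R * pi / (n.+1)%:R + al.
  by rewrite /al !natrM !mulrSr; ring.
have -> : (h * k)%:R * pi / (n.+1)%:R = (h * k.+1)%:R * pi / (n.+1)%:R - al.
  by rewrite /al !natrM !mulrSr; ring.
rewrite sinD sinB; ring.
Qed.

Lemma QS n h : (0 < n)%N ->
  \sum_(i < n) ff n h i.+1 * ff n h i.+2 =
  cos (h%:R * pi / (n.+1)%:R) * \sum_(i < n) ff n h i.+1 ^+ 2.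
Proof.
move=> n0.
set c := cos _.
have E : \sum_(i < n) ff n h i.+1 * (ff n h i.+2 + ff n h i) = 2 * c * \sum_(i < n) ff n h i.+1 ^+ 2.
  rewrite mulr_sumr; apply: eq_bigr => i _; rewrite ff_rec /c; ring.
have E2 : \sum_(i < n) ff n h i.+1 * ff n h i = \sum_(i < n) ff n h i.+1 * ff n h i.+2.
  clear E c; case: n n0 => // m _.
  rewrite big_ord_recl big_ord_recr /= ff0 mulr0 add0r.
  rewrite (ff_last m.+1 h) mulr0 addr0; apply: eq_bigr => i _; rewrite mulrC.
  by rewrite /bump /=.
move: E; rewrite (eq_bigr (fun i : 'I_n => ff n h i.+1 * ff n h i.+2 + ff n h i.+1 * ff n h i)); last first.
  by move=> i _; rewrite mulrDr.
rewrite big_split /= E2 => E.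
have : 2 * \sum_(i < n) ff n h i.+1 * ff n h i.+2 = 2 * (c * \sum_(i < n) ff n h i.+1 ^+ 2).
  by rewrite mulrA -E; ring.
have two : (2 : R) != 0 by rewrite pnatr_eq0.
by move/(mulfI two).
Qed.
Lemma cjE (z : C) : conjc z = z^*. Proof. by []. Qed.
Lemma cjR (r : R) : (r%:C)^* = r%:C :> C. Proof. exact: conjc_real. Qed.

Lemma cjR' (r : R) : conjc (r%:C : C) = r%:C.
Proof. by rewrite /= oppr0. Qed.

Lemma W_entry n h (sigma tau : C) (i j : 'I_n) :
  wilkinson n h sigma tau i j =
  ((vnorm2 (right_evec n h sigma tau) * vnorm2 (left_evec n h sigma tau))^-1)%:C *
  (sqrtc (tau^* / sigma^*) ^+ i.+1 * (sqrtc (sigma / tau))^* ^+ j.+1) *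
  (ff n h i.+1 * ff n h j.+1)%:C.
Proof.
rewrite /wilkinson !mxE big_ord1 !mxE -/(ff n h i.+1) -/(ff n h j.+1).
rewrite !rmorphM !rmorphXn /= !oppr0 !complexr0.
rewrite invfM (rmorphM (real_complex R)); ring.
Qed.

Lemma cdot_eq n h (sigma tau : C) :
  cdot (left_evec n h sigma tau) (right_evec n h sigma tau) =
  \sum_(k < n) ((sqrtc (tau^* / sigma^*))^* * sqrtc (sigma / tau)) ^+ k.+1 * (ff n h k.+1 ^+ 2)%:C.
Proof.
rewrite /cdot; apply: eq_bigr => k _; rewrite !mxE -/(ff n h k.+1).
rewrite !rmorphM !rmorphXn /= (@conj_Creal _ (ff n h k.+1)%:C) ?complex_real // exprMn; ring.
Qed.
Lemma normcC (z : C) : (Normc.normc z)%:C = `|z|. Proof. by []. Qed.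

Lemma normc_gt0 (z : C) : z != 0 -> 0 < Normc.normc z.
Proof.
move=> z0; rewrite lt_def; apply/andP; split.
  by apply/eqP => /Normc.eq0_normc /eqP; rewrite (negbTE z0).
by case: z {z0} => a b; rewrite /= sqrtr_ge0.
Qed.

Arguments normc_gt0 {z}.

Lemma normc_real (r : R) : Normc.normc (r%:C : C) = `|r|.
Proof. by rewrite /= expr0n addr0 sqrtr_sqr. Qed.

Lemma normc_conj (z : C) : Normc.normc (Num.conj z) = Normc.normc z.
Proof. by apply: (@complexI R); rewrite !normcC norm_conjC. Qed.

Lemma ns2 (z : C) : Normc.normc (sqrtc z) ^+ 2 = Normc.normc z.
Proof. by rewrite expr2 -Normc.normcM -expr2 sqr_sqrtc. Qed.

Lemma key_t (z : C) : z != 0 -> sqrtc (Num.conj (z^-1)) = ((Normc.normc z)^-1)%:C * sqrtc z.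
Proof.
move=> z0; have nz := normc_gt0 z0.
rewrite invC_norm rmorphM /= conjCK fmorphV /= rmorphXn /= conj_normC -normcC.
rewrite -(rmorphXn (real_complex R)) -(fmorphV (real_complex R)) sqrtcZ; last first.
  by rewrite invr_gt0 exprn_gt0.
by rewrite -exprVn sqrtr_sqr ger0_norm // invr_ge0 ltW.
Qed.

Lemma ts1 (z : C) : z != 0 -> (((Normc.normc z)^-1)%:C * sqrtc z) * Num.conj (sqrtc z) = 1.
Proof.
move=> z0; have nz := normc_gt0 z0.
rewrite -mulrA -normCK -normrX sqr_sqrtc -normcC -(rmorphM (real_complex R)).
by rewrite mulVf ?gt_eqF.
Qed.

Arguments ts1 {z}.
Lemma ts2 (z : C) : z != 0 -> Num.conj (((Normc.normc z)^-1)%:C * sqrtc z) * sqrtc z = 1.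
Proof.
move=> z0; have := ts1 z0; move/(congr1 Num.conj).
by rewrite rmorphM /= conjCK conjC1.
Qed.
Lemma vnorm2_gt0 n (v : 'cV[C]_n) (k : 'I_n) : v k 0 != 0 -> 0 < vnorm2 v.
Proof.
move=> vk; rewrite /vnorm2 sqrtr_gt0 (bigD1 k) //=.
apply: (@lt_le_trans _ _ (Normc.normc (v k 0) ^+ 2)).
  by rewrite exprn_gt0 // normc_gt0.
by rewrite lerDl sumr_ge0 // => i _; rewrite sqr_ge0.
Qed.

Lemma diag_sum (V : nmodType) n (F : 'I_n -> 'I_n -> V) :
  \sum_(i < n) \sum_(j < n) (if (i : nat) == j then F i j else 0) = \sum_(i < n) F i i.
Proof.
apply: eq_bigr => i _; rewrite (bigD1 i) //= eqxx big1 ?addr0 // => j ji.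
by rewrite (_ : (i : nat) == j = false) //; apply/negbTE; rewrite eq_sym.
Qed.

Lemma scal_sum n (p : 'I_n -> 'I_n -> bool) (c : C) (F : 'I_n -> 'I_n -> R) :
  \sum_(i < n) \sum_(j < n) (if p i j then c * (F i j)%:C else 0) =
  c * (\sum_(i < n) \sum_(j < n) (if p i j then F i j else 0))%:C.
Proof.
rewrite raddf_sum mulr_sumr; apply: eq_bigr => i _.
rewrite raddf_sum mulr_sumr; apply: eq_bigr => j _.
by case: ifP; rewrite ?rmorph0 ?mulr0.
Qed.

Lemma dsum_super n h :
  \sum_(i < n) \sum_(j < n) (if (j : nat) == i.+1 then ff n h i.+1 * ff n h j.+1 else 0) =
  \sum_(i < n) ff n h i.+1 * ff n h i.+2.
Proof.
apply: eq_bigr => i _.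
rewrite (sum_if_eq n i.+1 (fun k => ff n h i.+1 * ff n h k.+1)).
case: ifP => // /negbT; rewrite -leqNgt => ni.
have -> : i.+2 = n.+1 by apply/eqP; rewrite eqSS eqn_leq ni ltn_ord.
by rewrite ff_last mulr0.
Qed.

Lemma dsum_sub n h :
  \sum_(i < n) \sum_(j < n) (if (i : nat) == j.+1 then ff n h i.+1 * ff n h j.+1 else 0) =
  \sum_(i < n) ff n h i.+1 * ff n h i.+2.
Proof.
rewrite exchange_big /=; apply: eq_bigr => i _.
rewrite (sum_if_eq n i.+1 (fun k => ff n h k.+1 * ff n h i.+1)).
rewrite mulrC; case: ifP => // /negbT; rewrite -leqNgt => ni.
have -> : i.+2 = n.+1 by apply/eqP; rewrite eqSS eqn_leq ni ltn_ord.
by rewrite ff_last mulr0.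
Qed.

Lemma nM (x y : C) : Normc.normc (x * y) = Normc.normc x * Normc.normc y.
Proof. exact: Normc.normcM. Qed.
Lemma nV (x : C) : Normc.normc (x^-1) = (Normc.normc x)^-1.
Proof. exact: Normc.normcV. Qed.

Lemma L1 (N S : R) k : 0 <= N -> 0 <= S ->
  Normc.normc ((N^-1)%:C * S%:C / (k%:R : C)) = N^-1 * S / k%:R.
Proof.
move=> N0 S0.
by rewrite !nM nV !normc_real -(rmorph_nat (real_complex R)) normc_real normr_nat !ger0_norm // invr_ge0.
Qed.
Lemma L2 (N Q : R) (u : C) k : 0 <= N ->
  Normc.normc ((N^-1)%:C * u * Q%:C / (k%:R : C)) = N^-1 * Normc.normc u * `|Q| / k%:R.
Proof.
move=> N0.
by rewrite !nM nV !normc_real -(rmorph_nat (real_complex R)) normc_real normr_nat [`|N^-1|]ger0_norm // invr_ge0.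
Qed.

Lemma L3 (r : R) (u : C) : 0 <= r -> Normc.normc ((r^-1)%:C * u) = r^-1 * Normc.normc u.
Proof. by move=> r0; rewrite nM normc_real ger0_norm // invr_ge0. Qed.

Lemma nn k : Normc.normc (k%:R : C) = k%:R.
Proof. by rewrite -(rmorph_nat (real_complex R)) normc_real normr_nat. Qed.
End H.
Arguments normc_gt0 {R z}.
Arguments ff {R}.
Arguments ts1 {R z}.
Arguments ts2 {R z}.
Arguments key_t {R z}.
Arguments ff_1_gt0 {R n h}.
Arguments vnorm2_gt0 {R n v}.

Theorem proposition9 (R : realType) (n h : nat) (sigma delta tau : R[i]) :
  (2 <= n)%N -> sigma * tau != 0 -> (1 <= h <= n)%N ->
  (exists P : 'M[R[i]]_n, is_orth_proj_T (wilkinson n h sigma tau) P) /\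
  (forall P : 'M[R[i]]_n, is_orth_proj_T (wilkinson n h sigma tau) P ->
     kappa n h sigma tau * frob_norm P =
     Num.sqrt (1 / n%:R + 1 / (n - 1)%:R *
        (Normc.normc (sigma / tau) + Normc.normc (tau / sigma)) *
        cos (h%:R * pi / (n.+1)%:R) ^+ 2)).
Proof.
move=> n2 st0 hh.
split; first exact: proj_exists.
move=> P /proj_char [a [d [b [-> [Hd [Hb Ha]]]]]].
have n0 : (0 < n)%N by apply: ltnW.
move: st0; rewrite mulf_eq0 negb_or => /andP[sig0 tau0].
set z := sigma / tau.
have z0 : z != 0 by rewrite mulf_neq0 ?invr_eq0.
have Et : Num.conj tau / Num.conj sigma = Num.conj (z^-1) by rewrite /z invf_div fmorph_div.
set nz := Normc.normc z.
have nz0 : 0 < nz := normc_gt0 z0.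
set s := sqrtc z.
set t := (nz^-1)%:C * s.
have Tt : sqrtc (Num.conj tau / Num.conj sigma) = t by rewrite Et key_t.
have T1 : t * Num.conj s = 1 := ts1 z0.
have T2 : Num.conj t * s = 1 := ts2 z0.
have s0 : s != 0 by rewrite sqrtc_eq0.
have f1 : 0 < ff (R:=R) n h 1 := ff_1_gt0 hh.
set x := right_evec n h sigma tau.
set y := left_evec n h sigma tau.
set nx := vnorm2 x.
set ny := vnorm2 y.
have nx0 : 0 < nx.
  apply: (vnorm2_gt0 (Ordinal n0)); rewrite /x mxE mulf_neq0 ?expf_neq0 //.
  by rewrite -/(ff n h 1) (fmorph_eq0 (real_complex R)) gt_eqF.
have ny0 : 0 < ny.
  apply: (vnorm2_gt0 (Ordinal n0)); rewrite /y mxE mulf_neq0 ?expf_neq0 //.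
    by rewrite Tt mulf_neq0 // (fmorph_eq0 (real_complex R)) invr_eq0 gt_eqF.
  by rewrite -/(ff n h 1) (fmorph_eq0 (real_complex R)) gt_eqF.
set N := nx * ny.
set S := \sum_(k < n) (ff n h k.+1 : R) ^+ 2.
set Q := \sum_(k < n) (ff n h k.+1 : R) * ff n h k.+2.
have WE : forall i j, wilkinson n h sigma tau i j =
   (N^-1)%:C * (t ^+ i.+1 * Num.conj s ^+ j.+1) * (ff n h i.+1 * ff n h j.+1)%:C.
  by move=> i j; rewrite W_entry Tt.
have DW : diagS R n (wilkinson n h sigma tau) = (N^-1)%:C * S%:C.
  rewrite /diagS.
  transitivity (\sum_(i < n) \sum_(j < n) (if (i : nat) == j then (N^-1)%:C * (ff n h i.+1 * ff n h j.+1)%:C else 0)).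
    apply: eq_bigr => i _; apply: eq_bigr => j _; case: eqP => // E.
    by rewrite WE -E -exprMn T1 expr1n mulr1.
  rewrite (@scal_sum R n (fun i j : 'I_n => (i : nat) == j)) diag_sum.
  by congr (_ * _%:C); apply: eq_bigr => i _; rewrite expr2.
have SW : superS R n (wilkinson n h sigma tau) = (N^-1)%:C * Num.conj s * Q%:C.
  rewrite /superS.
  transitivity (\sum_(i < n) \sum_(j < n) (if (j : nat) == i.+1 then (N^-1)%:C * Num.conj s * (ff n h i.+1 * ff n h j.+1)%:C else 0)).
    apply: eq_bigr => i _; apply: eq_bigr => j _; case: eqP => // E.
    by rewrite WE E (exprS (Num.conj s) i.+1) [t ^+ _ * _]mulrCA -exprMn T1 expr1n mulr1.
  by rewrite (@scal_sum R n (fun i j : 'I_n => (j : nat) == i.+1)) dsum_super.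
have BW : subS R n (wilkinson n h sigma tau) = (N^-1)%:C * t * Q%:C.
  rewrite /subS.
  transitivity (\sum_(i < n) \sum_(j < n) (if (i : nat) == j.+1 then (N^-1)%:C * t * (ff n h i.+1 * ff n h j.+1)%:C else 0)).
    apply: eq_bigr => i _; apply: eq_bigr => j _; case: eqP => // E.
    by rewrite WE E (exprS t j.+1) -[t * _ * _]mulrA -exprMn T1 expr1n mulr1.
  by rewrite (@scal_sum R n (fun i j : 'I_n => (i : nat) == j.+1)) dsum_sub.
have CD : cdot y x = S%:C.
  rewrite /x /y cdot_eq Tt T2 raddf_sum; apply: eq_bigr => k _.
  by rewrite expr1n mul1r.
have nN : (n%:R : R[i]) != 0 by rewrite pnatr_eq0 -lt0n.
have nN1 : (n.-1%:R : R[i]) != 0 by rewrite pnatr_eq0 -subn1 subn_eq0 -ltnNge.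
have ed : d = (N^-1)%:C * S%:C / n%:R by rewrite -DW Hd -[d *+ n]mulr_natr mulfK.
have eb : b = (N^-1)%:C * Num.conj s * Q%:C / n.-1%:R by rewrite -SW Hb -[b *+ _]mulr_natr mulfK.
have ea : a = (N^-1)%:C * t * Q%:C / n.-1%:R by rewrite -BW Ha -[a *+ _]mulr_natr mulfK.
have S0 : 0 < S.
  rewrite /S (bigD1 (Ordinal n0)) //=; apply: (@lt_le_trans _ _ (ff n h 1 ^+ 2)).
    by rewrite exprn_gt0.
  by rewrite lerDl sumr_ge0 // => i _; rewrite sqr_ge0.
have N0 : 0 < N by rewrite mulr_gt0.
rewrite /kappa /= -/x -/y CD normc_real (gtr0_norm S0) frob_norm_tt ed eb ea.
rewrite L1 ?(ltW N0) ?(ltW S0) // !L2 ?(ltW N0) // normc_conj /t L3 ?(ltW nz0) //.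
have -> : tau / sigma = z^-1 by rewrite /z invf_div.
rewrite nV -/nz.
set ns := Normc.normc s.
have Enz : nz = ns ^+ 2 by rewrite /ns ns2.
rewrite !Enz -/nx -/ny -/N.
have -> : N / S = Num.sqrt ((N / S) ^+ 2) by rewrite sqrtr_sqr ger0_norm // divr_ge0 // ltW.
rewrite -sqrtrM ?sqr_ge0 //; congr Num.sqrt.
rewrite /Q QS // normrM (gtr0_norm S0) subn1.
set cc := cos _.
have E : cc ^+ 2 = `|cc| ^+ 2 by rewrite real_normK // num_real.
rewrite E.
have ns0 : ns != 0 by rewrite /ns; apply/eqP => /Normc.eq0_normc /eqP; rewrite (negbTE s0).
have nR : (n%:R : R) != 0 by rewrite pnatr_eq0 -lt0n.
have nR1 : (n.-1%:R : R) != 0 by rewrite pnatr_eq0 -subn1 subn_eq0 -ltnNge.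
have N0' : N != 0 by rewrite gt_eqF.
have S0' : S != 0 by rewrite gt_eqF.
field.
by rewrite ns0 nR1 nR N0' S0'.
Qed.
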